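(* For $0<q<1$, $$\log\tilde\Gamma(q)=-\log q+\tilde\gamma_0\, q+\sum_{k=2}^\infty\frac{(-1)^{k-1}\zeta_E(k)}{k}\,q^k,$$ where $\tilde\Gamma(q)=\frac1q e^{\tilde\gamma_0 q}\prod_{k=1}^\infty\left(e^{-\frac qk}\left(1+\frac qk\right)\right)^{(-1)^{k+1}}$.
   Context: $\zeta_E(z)=\sum_{n=1}^\infty(-1)^{n+1}n^{-z}$ (alternating zeta function, continued analytically in $z$). For $q>0$, $\zeta_E(z,q)=\sum_{n=0}^\infty (-1)^n (n+q)^{-z}$ for $\mathrm{Re}(z)>0$, extended analytically; the modified Stieltjes constants $\tilde\gamma_k(q)$ are defined by $\zeta_E(z,q)=\sum_{k\ge0}\frac{(-1)^k\tilde\gamma_k(q)}{k!}(z-1)^k$, and $\tilde\gamma_0:=\tilde\gamma_0(1)=\zeta_E(1)$. The modified gamma function $\tilde\Gamma$ is the function given by the product above for $q>0$; it satisfies $\frac{d}{dq}\log\tilde\Gamma(q)=-\zeta_E(1,q)$. *)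

(* Defs.v *)
From Stdlib Require Import Reals.
From Coquelicot Require Import Coquelicot.
Open Scope R_scope.

(* zeta_E(s) = sum_{n>=1} (-1)^(n+1) n^(-s), for a natural exponent s >= 1
   (series convergent; at s = 1 only conditionally, Series = limit of partial sums). *)
Definition zetaE (s : nat) : R :=
  Series (fun n : nat => (-1) ^ n / (INR (n + 1)) ^ s).

Definition gamma0t : R := zetaE 1.

Definition tGamma_factor (q : R) (k : nat) : R :=
  let f := exp (- (q / INR k)) * (1 + q / INR k) in
  if Nat.odd k then f else / f.

Fixpoint tGamma_pprod (q : R) (N : nat) : R :=
  match N with
  | O => 1
  | S N' => tGamma_pprod q N' * tGamma_factor q (S N')
  end.

Definition tGamma_prod (q : R) : R := real (Lim_seq (tGamma_pprod q)).

Definition tGamma (q : R) : R := / q * exp (gamma0t * q) * tGamma_prod q.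

(* Main.v *)
Require Import Defs.
From Stdlib Require Import Reals Lra Lia.
From Coquelicot Require Import Coquelicot.
Open Scope R_scope.

Lemma is_series_of_lim (a : nat -> R) (l : R) : is_lim_seq (sum_n a) l -> is_series a l.
Proof. intro H. exact H. Qed.

Fixpoint Pm (M : nat) (y : R) : R :=
  match M with O => y | S M' => Pm M' y + (-1)^(S M') * y^(S M' + 1) / INR (S M' + 1) end.
Fixpoint Gm (M : nat) (y : R) : R :=
  match M with O => 1 | S M' => Gm M' y + (-y)^(S M') end.

Lemma Gm_eq M y : Gm M y * (1 + y) = 1 - (-y)^(S M).
Proof. induction M; simpl Gm. simpl; ring. simpl pow in *. nra. Qed.

Lemma term_der m y : is_derive (fun y => (-1)^m * y^(m + 1) / INR (m + 1)) y ((-y)^m).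
Proof.
  auto_derive. auto. rewrite Nat.add_1_r; simpl pred. replace (-y) with ((-1)*y) by ring.
  rewrite Rpow_mult_distr. field. apply not_0_INR. lia.
Qed.

Lemma Pm_der M y : is_derive (Pm M) y (Gm M y).
Proof.
  induction M; simpl Pm; simpl Gm.
  - apply (is_derive_id y).
  - apply (is_derive_plus (Pm M) (fun y => (-1)^(S M) * y^(S M + 1) / INR (S M + 1))).
    exact IHM. apply term_der.
Qed.

Lemma Pm0 M : Pm M 0 = 0.
Proof. induction M; simpl Pm. auto. rewrite IHM, pow_i by lia. unfold Rdiv. ring. Qed.

Lemma Pm_lim x : 0 <= x < 1 -> is_lim_seq (fun M => Pm M x) (ln (1 + x)).
Proof.
  intros [hx0 hx1].
  assert (Hb : forall M, Rabs (ln (1 + x) - Pm M x) <= x ^ M / (1 - x)).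
  { intro M.
    set (g := fun y => ln (1 + y) - Pm M y).
    destruct (MVT_cor4 g (fun c => (-c)^(S M) / (1 + c)) 0 x) with (b := x) as [c [Hc1 Hc2]].
    - intros c Hc. rewrite Rminus_0_r in Hc. apply Rabs_le_between in Hc.
      replace ((-c)^(S M) / (1 + c)) with (/(1+c) * 1 - Gm M c).
      apply (is_derive_minus (fun y => ln (1+y)) (Pm M)).
      + auto_derive. lra. ring.
      + apply Pm_der.
      + pose proof (Gm_eq M c). field_simplify_eq. 2: lra. replace ((-c)^S M) with (1 - Gm M c*(1+c)) by lra; ring.
    - rewrite Rminus_0_r, Rabs_right; lra.
    - unfold g in Hc1. rewrite Pm0, Rplus_0_r, ln_1 in Hc1.
      rewrite !Rminus_0_r in *. 
      replace (ln (1 + x) - Pm M x) with ((- c) ^ S M / (1 + c) * x) by lra.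
      rewrite (Rabs_right x) in Hc2 by lra.
      apply Rabs_le_between in Hc2.
      rewrite Rabs_mult, Rabs_div, <- RPow_abs, Rabs_Ropp, (Rabs_right x) by lra.
      rewrite (Rabs_right (1+c)) by lra.
      assert (Rabs c ^ S M <= x ^ S M). { apply pow_incr. split. apply Rabs_pos. apply Rabs_le. lra. }
      assert (0 <= Rabs c ^ S M) by (apply pow_le; apply Rabs_pos).
      simpl pow in *. 
      apply Rmult_le_reg_r with ((1+c)*(1-x)). nra.
      field_simplify. 2: lra. 2: lra.
      assert (0 <= x ^ M) by (apply pow_le; lra).
      set (A := Rabs c * Rabs c ^ M) in *.
      assert (HA : A * x <= x ^ M).
      { apply Rle_trans with (x * x ^ M * x). apply Rmult_le_compat_r; lra.
        assert (x * x <= 1) by nra. nra. }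
      assert (A * x * (1 - x) <= x ^ M * (1 - x)) by (apply Rmult_le_compat_r; lra).
      assert (x ^ M * (1 - x) <= x ^ M * (1 + c)) by (apply Rmult_le_compat_l; lra).
      replace (c * x ^ M + x ^ M) with (x ^ M * (1 + c)) by ring.
      replace (- Rabs c * Rabs c ^ M * x ^ 2 + A * x) with (A * x * (1 - x)) by (unfold A; ring). lra. }
  assert (He : is_lim_seq (fun M => x ^ M / (1 - x)) 0).
  { replace 0 with (0 * / (1 - x)) by ring.
    apply (is_lim_seq_scal_r (fun M => x ^ M) (/ (1 - x)) 0).
    apply is_lim_seq_geom. rewrite Rabs_right; lra. }
  apply is_lim_seq_le_le with (u := fun M => ln (1 + x) - x ^ M / (1 - x))
                              (w := fun M => ln (1 + x) + x ^ M / (1 - x)).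
  - intro M. specialize (Hb M). apply Rabs_le_between in Hb. lra.
  - replace (Finite (ln (1 + x))) with (Finite (ln (1 + x) - 0)) by (f_equal; ring).
    apply is_lim_seq_minus'. apply is_lim_seq_const. exact He.
  - replace (Finite (ln (1 + x))) with (Finite (ln (1 + x) + 0)) by (f_equal; ring).
    apply is_lim_seq_plus'. apply is_lim_seq_const. exact He.
Qed.

Lemma ln_series x : 0 <= x < 1 ->
  is_series (fun n => (-1) ^ (n + 1) * x ^ (n + 2) / INR (n + 2)) (ln (1 + x) - x).
Proof.
  intro hx.
  set (a := fun m => (-1) ^ m * x ^ (m + 1) / INR (m + 1)).
  assert (Hs : forall M, sum_n a M = Pm M x).
  { induction M. rewrite sum_O. unfold a; simpl. field.
    rewrite sum_Sn, IHM. reflexivity. }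
  assert (H : is_series a (ln (1 + x))).
  { apply is_series_of_lim. apply is_lim_seq_ext with (fun M => Pm M x).
    intro; symmetry; apply Hs. apply Pm_lim; auto. }
  assert (H2 : is_series a (plus (ln (1 + x) - x) (a 0%nat))).
  { replace (plus (ln (1 + x) - x) (a 0%nat)) with (ln (1 + x)). exact H.
    unfold a, plus; simpl. field. }
  pose proof (@is_series_incr_1 R_AbsRing R_NormedModule a (ln (1 + x) - x) H2) as H3. clear H2. rename H3 into H2.
  eapply is_series_ext. 2: exact H2.
  intro n. unfold a. replace (S n + 1)%nat with (n + 2)%nat by lia.
  rewrite Nat.add_1_r. reflexivity.
Qed.


Fixpoint psum (a : nat -> R) (N : nat) : R :=
  match N with O => 0 | S N' => psum a N' + a N' end.

Lemma tail_series a l N : is_series a l -> is_series (fun k => a (N + k)%nat) (l - psum a N).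
Proof.
  intro H. induction N.
  - simpl psum. rewrite Rminus_0_r. eapply is_series_ext. 2: exact H. reflexivity.
  - assert (H2 : is_series (fun k => a (N + k)%nat) (plus (l - psum a (S N)) (a (N + 0)%nat))).
    { replace (plus (l - psum a (S N)) (a (N + 0)%nat)) with (l - psum a N). exact IHN.
      unfold plus; simpl. rewrite Nat.add_0_r. ring. }
    pose proof (@is_series_incr_1 R_AbsRing R_NormedModule _ _ H2) as H3.
    eapply is_series_ext. 2: exact H3. intro k. simpl. f_equal. lia.
Qed.

Definition tele (N k : nat) : R := / (INR (k + N + 1) * INR (k + N + 2)).

Lemma tele_series N : is_series (tele N) (/ INR (N + 1)).
Proof.
  apply is_series_of_lim.
  apply is_lim_seq_ext with (fun K => / INR (N + 1) - / INR (K + N + 2)).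
  - intro K. induction K.
    + rewrite sum_O. unfold tele. simpl. 
      replace (N + 2)%nat with (S (N + 1)) by lia. rewrite S_INR.
      assert (0 < INR (N + 1)) by (apply lt_0_INR; lia). field. lra.
    + rewrite sum_Sn, <- IHK. unfold tele.
      replace (S K + N + 1)%nat with (K + N + 2)%nat by lia.
      replace (S K + N + 2)%nat with (K + N + 3)%nat by lia.
      change (plus ?x ?y) with (x + y).
      rewrite !plus_INR. replace (INR 3) with 3 by (simpl; ring). replace (INR 2) with 2 by (simpl; ring).
      assert (0 <= INR K) by apply pos_INR. assert (0 <= INR N) by apply pos_INR.
      rewrite (INR_1 : INR 1 = 1). field. lra.
  - replace (Finite (/ INR (N + 1))) with (Finite (/ INR (N + 1) - 0)) by (f_equal; ring).
    apply is_lim_seq_minus'. apply is_lim_seq_const.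
    assert (Hinf : is_lim_seq (fun K => INR (K + N + 2)) p_infty).
    { apply is_lim_seq_ext with (fun K => INR (K + (N + 2))). intro; f_equal; lia.
      apply (is_lim_seq_incr_n INR (N + 2) p_infty). apply is_lim_seq_INR. }
    pose proof (is_lim_seq_inv _ _ Hinf) as Hi. simpl in Hi. apply Hi. discriminate.
Qed.


Definition zt (s : nat) (n : nat) : R := (-1) ^ n / (INR (n + 1)) ^ s.

Lemma zt_bound s N k : (2 <= s)%nat -> Rabs (zt s (N + k)) <= 2 * tele N k.
Proof.
  intro hs. unfold zt, tele.
  set (u := INR (N + k + 1)).
  replace (INR (k + N + 1)) with u by (unfold u; f_equal; lia).
  replace (INR (k + N + 2)) with (u + 1) by (unfold u; rewrite <- S_INR; f_equal; lia).
  assert (hu : 1 <= u). { unfold u. rewrite plus_INR, INR_1. pose proof (pos_INR (N + k)). lra. }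
  rewrite Rabs_div, pow_1_abs, Rabs_right. 2: apply Rle_ge, pow_le; lra.
  2: apply pow_nonzero; lra.
  replace s with (2 + (s - 2))%nat by lia. rewrite pow_add.
  assert (1 <= u ^ (s - 2)) by (apply pow_R1_Rle; lra).
  apply Rmult_le_reg_r with (u ^ 2 * u ^ (s - 2) * (u * (u + 1))).
  { apply Rmult_lt_0_compat. apply Rmult_lt_0_compat. apply pow_lt; lra. lra. nra. }
  field_simplify.
  - assert (u ^ 2 * 1 <= u ^ 2 * u ^ (s - 2)) by (apply Rmult_le_compat_l; [apply pow_le; lra | lra]).
    simpl in *. nra.
  - split; lra.
  - split; [apply pow_nonzero|]; lra.
Qed.

Lemma zeta_tail s N : (2 <= s)%nat ->
  is_series (zt s) (Series (zt s)) /\ Rabs (Series (zt s) - psum (zt s) N) <= 2 / INR (N + 1).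
Proof.
  intro hs.
  assert (Hb : forall M, ex_series (fun k => 2 * tele M k)).
  { intro M. eexists. apply (is_series_scal 2 (tele M)). apply tele_series. }
  assert (Hex : ex_series (zt s)).
  { apply (@ex_series_le R_AbsRing R_CompleteNormedModule) with (fun k => 2 * tele 0 k). 2: apply Hb.
    intro n. apply (zt_bound s 0 n hs). }
  apply Series_correct in Hex.
  split. exact Hex.
  pose proof (tail_series _ _ N Hex) as Ht. apply is_series_unique in Ht.
  rewrite <- Ht.
  eapply Rle_trans. apply Series_Rabs.
  { apply (@ex_series_le R_AbsRing R_CompleteNormedModule) with (fun k => 2 * tele N k). 2: apply Hb.
    intro n. unfold norm; simpl. unfold abs; simpl. rewrite Rabs_Rabsolu. apply zt_bound; auto. }
  eapply Rle_trans. apply Series_le with (b := fun k => 2 * tele N k).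
  intro n. split. apply Rabs_pos. apply zt_bound; auto. apply Hb.
  rewrite Series_scal_l. rewrite (is_series_unique _ _ (tele_series N)). unfold Rdiv. lra.
Qed.


Section Main.
Variable q : R.
Hypothesis hq0 : 0 < q.
Hypothesis hq1 : q < 1.

Definition xj (j : nat) : R := q / INR (S j).
Definition bj (j : nat) : R := (-1) ^ j * (ln (1 + xj j) - xj j).
Definition wn (n : nat) : R := (-1) ^ (n + 1) * q ^ (n + 2) / INR (n + 2).

Lemma xj_range j : 0 <= xj j < 1.
Proof.
  unfold xj. assert (1 <= INR (S j)) by (rewrite S_INR; pose proof (pos_INR j); lra).
  split. apply Rdiv_le_0_compat; lra.
  apply Rmult_lt_reg_r with (INR (S j)). lra. unfold Rdiv. rewrite Rmult_assoc, Rinv_l by lra. nra.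
Qed.

Lemma bj_series j : is_series (fun n => wn n * zt (n + 2) j) (bj j).
Proof.
  pose proof (ln_series (xj j) (xj_range j)) as H.
  pose proof (is_series_scal ((-1) ^ j) _ _ H) as H2.
  eapply is_series_ext. 2: exact H2.
  intro n. unfold scal; simpl. unfold mult; simpl. unfold wn, zt, xj.
  rewrite Nat.add_1_r.
  assert (0 < INR (S j)) by (apply lt_0_INR; lia).
  assert (0 < INR (n + 2)) by (apply lt_0_INR; lia).
  replace (j + 1)%nat with (S j) by lia. unfold Rdiv. rewrite Rpow_mult_distr, pow_inv. ring.
Qed.

Lemma is_series_0 : is_series (fun _ : nat => 0) 0.
Proof.
  apply is_series_of_lim. apply is_lim_seq_ext with (fun _ => 0).
  intro n. rewrite sum_n_const. ring. apply is_lim_seq_const.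
Qed.

Lemma psum_series N : is_series (fun n => wn n * psum (zt (n + 2)) N) (psum bj N).
Proof.
  induction N; simpl.
  - eapply is_series_ext. 2: exact is_series_0. intro; simpl; ring.
  - pose proof (is_series_plus _ _ _ _ IHN (bj_series N)) as H.
    eapply is_series_ext. 2: exact H. intro n. unfold plus; simpl. ring.
Qed.


Lemma wn_bound n : Rabs (wn n) <= q ^ n.
Proof.
  unfold wn. assert (1 <= INR (n + 2)) by (rewrite plus_INR; simpl; pose proof (pos_INR n); lra).
  rewrite Rabs_div, Rabs_mult, pow_1_abs, Rabs_right. 2: apply Rle_ge, pow_le; lra. 2: lra.
  rewrite (Rabs_right (INR _)) by lra.
  apply Rle_trans with (q ^ (n + 2)).
  - unfold Rdiv. rewrite Rmult_1_l. rewrite <- (Rmult_1_r (q ^ (n + 2))) at 2.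
    apply Rmult_le_compat_l. apply pow_le; lra.
    rewrite <- Rinv_1. apply Rinv_le_contravar; lra.
  - rewrite pow_add. rewrite <- (Rmult_1_r (q ^ n)) at 2. apply Rmult_le_compat_l. apply pow_le; lra.
    simpl. nra.
Qed.

Lemma zetaE_eq s : zetaE s = Series (zt s).
Proof. reflexivity. Qed.

Lemma geom_ex c : ex_series (fun n => c * q ^ n).
Proof. eexists. apply (is_series_scal c (fun n => q ^ n)). apply is_series_geom. rewrite Rabs_right; lra. Qed.

Lemma T_series : ex_series (fun n => wn n * zetaE (n + 2)).
Proof.
  apply (@ex_series_le R_AbsRing R_CompleteNormedModule) with (fun n => 2 * q ^ n). 2: apply geom_ex.
  intro n. unfold norm; simpl; unfold abs; simpl. rewrite Rabs_mult.
  destruct (zeta_tail (n + 2) 0 ltac:(lia)) as [_ Hz]. simpl psum in Hz. rewrite Rminus_0_r in Hz.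
  replace (INR (0 + 1)) with 1 in Hz by (simpl; ring). rewrite <- zetaE_eq in Hz.
  pose proof (wn_bound n). pose proof (Rabs_pos (wn n)). pose proof (Rabs_pos (zetaE (n + 2))).
  nra.
Qed.

Definition TT : R := Series (fun n => wn n * zetaE (n + 2)).

Lemma diff_bound N : Rabs (TT - psum bj N) <= 2 / INR (N + 1) * / (1 - q).
Proof.
  pose proof (Series_correct _ T_series) as H1.
  pose proof (is_series_minus _ _ _ _ H1 (psum_series N)) as H2.
  apply is_series_unique in H2. unfold plus, opp in H2; simpl in H2. fold TT in H2.
  change (TT - psum bj N) with (TT + - psum bj N). rewrite <- H2.
  set (c := 2 / INR (N + 1)).
  assert (Hb : forall n, Rabs (wn n * zetaE (n + 2) + - (wn n * psum (zt (n + 2)) N)) <= c * q ^ n).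
  { intro n. replace (wn n * zetaE (n + 2) + - (wn n * psum (zt (n + 2)) N))
      with (wn n * (Series (zt (n + 2)) - psum (zt (n + 2)) N)) by (rewrite zetaE_eq; ring).
    rewrite Rabs_mult. destruct (zeta_tail (n + 2) N ltac:(lia)) as [_ Hz].
    pose proof (wn_bound n). pose proof (Rabs_pos (wn n)).
    pose proof (Rabs_pos (Series (zt (n + 2)) - psum (zt (n + 2)) N)).
    rewrite Rmult_comm. apply Rmult_le_compat; auto. }
  eapply Rle_trans. apply Series_Rabs.
  { apply (@ex_series_le R_AbsRing R_CompleteNormedModule) with (fun n => c * q ^ n). 2: apply geom_ex.
    intro n. unfold norm; simpl; unfold abs; simpl. rewrite Rabs_Rabsolu. apply Hb. }
  eapply Rle_trans. apply Series_le with (b := fun n => c * q ^ n).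
  intro n. split. apply Rabs_pos. apply Hb. apply geom_ex.
  rewrite Series_scal_l.
  rewrite (is_series_unique (pow q) _ (is_series_geom q ltac:(rewrite Rabs_right; lra))). lra.
Qed.


Lemma Lconv : is_lim_seq (psum bj) TT.
Proof.
  assert (Hinf : is_lim_seq (fun K => INR (K + 1)) p_infty).
  { apply (is_lim_seq_incr_n INR 1 p_infty). apply is_lim_seq_INR. }
  pose proof (is_lim_seq_inv _ _ Hinf) as Hi. simpl in Hi.
  assert (He : is_lim_seq (fun N => 2 / INR (N + 1) * / (1 - q)) 0).
  { replace 0 with (2 * 0 * / (1 - q)) by ring.
    apply (is_lim_seq_scal_r (fun N => 2 / INR (N + 1)) (/ (1 - q)) (2 * 0)).
    apply (is_lim_seq_scal_l (fun N => / INR (N + 1)) 2 0). apply Hi. discriminate. }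
  apply is_lim_seq_le_le with (u := fun N => TT - 2 / INR (N + 1) * / (1 - q))
                              (w := fun N => TT + 2 / INR (N + 1) * / (1 - q)).
  - intro N. pose proof (diff_bound N) as Hb. apply Rabs_le_between in Hb. lra.
  - replace (Finite TT) with (Finite (TT - 0)) by (f_equal; ring).
    apply is_lim_seq_minus'. apply is_lim_seq_const. exact He.
  - replace (Finite TT) with (Finite (TT + 0)) by (f_equal; ring).
    apply is_lim_seq_plus'. apply is_lim_seq_const. exact He.
Qed.

Lemma parity j : (-1) ^ j = if Nat.odd (S j) then 1 else -1.
Proof.
  rewrite Nat.odd_succ. induction j. reflexivity.
  rewrite Nat.even_succ, <- Nat.negb_even. simpl pow. rewrite IHj.
  destruct (Nat.even j); simpl; ring.
Qed.

Lemma factor_eq j : tGamma_factor q (S j) = exp (bj j).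
Proof.
  unfold tGamma_factor, bj. fold (xj j).
  pose proof (xj_range j) as Hx.
  assert (Hf : exp (- xj j) * (1 + xj j) = exp (ln (1 + xj j) - xj j)).
  { unfold Rminus. rewrite exp_plus, exp_ln by lra. ring. }
  rewrite parity. destruct (Nat.odd (S j)).
  - rewrite Hf. f_equal. ring.
  - rewrite Hf. rewrite <- exp_Ropp. f_equal. ring.
Qed.

Lemma pprod_eq N : tGamma_pprod q N = exp (psum bj N).
Proof.
  induction N; simpl. rewrite exp_0; auto.
  rewrite IHN, factor_eq, exp_plus. reflexivity.
Qed.

End Main.

Theorem corollary3p13 (q : R) (hq0 : 0 < q) (hq1 : q < 1) :
  ex_finite_lim_seq (tGamma_pprod q) /\
  is_series
    (fun n : nat => (-1) ^ (n + 1) * zetaE (n + 2) / INR (n + 2) * q ^ (n + 2))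
    (ln (tGamma q) - (- ln q + gamma0t * q)).
Proof.
  assert (Hl : is_lim_seq (tGamma_pprod q) (exp (TT q))).
  { apply is_lim_seq_ext with (fun N => exp (psum (bj q) N)).
    intro N; symmetry; apply pprod_eq; auto.
    apply (is_lim_seq_continuous exp (psum (bj q))).
    apply derivable_continuous_pt. apply derivable_pt_exp.
    apply Lconv; auto. }
  split. exists (exp (TT q)). exact Hl.
  assert (Hp : tGamma_prod q = exp (TT q)).
  { unfold tGamma_prod. rewrite (is_lim_seq_unique _ _ Hl). reflexivity. }
  unfold tGamma. rewrite Hp.
  assert (0 < / q) by (apply Rinv_0_lt_compat; lra).
  rewrite ln_mult, ln_mult, ln_Rinv, !ln_exp; try lra; try apply exp_pos.
  2: apply Rmult_lt_0_compat; [lra | apply exp_pos].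
  replace (- ln q + gamma0t * q + TT q - (- ln q + gamma0t * q)) with (TT q) by ring.
  pose proof (Series_correct _ (T_series q hq0 hq1)) as HT.
  eapply is_series_ext. 2: exact HT.
  intro n. change (wn q n * zetaE (n + 2) = (-1) ^ (n + 1) * zetaE (n + 2) / INR (n + 2) * q ^ (n + 2)). unfold wn. unfold Rdiv. ring.
Qed.
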